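(* Let $M$ be a monoid and let $D:M\times M\to\overline{\mathbb N}$ be a mapping. Then the following are equivalent: (i) $D$ is a strict length function for $M$; (ii) $D=D_\chi$ for some strongly faithful elliptic $M$-tree $\chi$. Moreover, if these conditions hold, $\chi$ is unique up to isomorphism of elliptic $M$-trees.
   Context: $\overline{\mathbb N}=\mathbb N\cup\{\omega\}$. A length function for $M$ is $D:M\times M\to\overline{\mathbb N}$ satisfying (L1) $D(m,m')=D(m',m)$; (L2) $D(m',m'')\le D(m,m)$; (L3) $D(m',m'')\le D(m'm,m''m)$; (L4) $D(m,m'')\ge\min\{D(m,m'),D(m',m'')\}$; it is strict if also (L5) $D(m',m'')=D(m,m)\Rightarrow m'=m''$. Rooted trees, rays, maximal rays, uniform rooted trees (all maximal rays have equal length), $\alpha\wedge\beta$ = longest common initial segment of rays, $|\cdot|$ = length. An elliptic $M$-tree is $\chi=(r_0,T,\alpha,\theta)$ with $(r_0,T)$ uniform, $\alpha$ a maximal ray, $\theta$ a monoid homomorphism from $M$ into the monoid of depth-preserving distance-non-increasing self-maps of $\mathrm{Vert}(T)$, such that $\mathrm{Vert}(T)=\bigcup_i\alpha_iM$ (actions extended componentwise to rays). It is strongly faithful if $\alpha m=\alpha m'$ implies $m=m'$. $D_\chi(m,m')=|\alpha m\wedge\alpha m'|$. Isomorphism of elliptic $M$-trees: bijective elliptic contraction carrying $\alpha$ to $\alpha'$ and commuting with the actions. *)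

(* Defs.v *)
From Stdlib Require Import Arith.

Inductive nbar : Type := Fin (n : nat) | Omega.

Definition nle (x y : nbar) : Prop :=
  match x, y with
  | _, Omega => True
  | Omega, Fin _ => False
  | Fin a, Fin b => a <= b
  end.

Definition nmin (x y : nbar) : nbar :=
  match x, y with
  | Omega, z => z
  | z, Omega => z
  | Fin a, Fin b => Fin (Nat.min a b)
  end.

Definition is_length_function (M : Type) (mul : M -> M -> M)
    (D : M -> M -> nbar) : Prop :=
  (forall m m', D m m' = D m' m) /\                                   (* L1 *)
  (forall m m' m'', nle (D m' m'') (D m m)) /\                         (* L2 *)
  (forall m m' m'', nle (D m' m'') (D (mul m' m) (mul m'' m))) /\      (* L3 *)
  (forall m m' m'', nle (nmin (D m m') (D m' m'')) (D m m'')).         (* L4 *)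

Definition is_strict_length_function (M : Type) (mul : M -> M -> M)
    (D : M -> M -> nbar) : Prop :=
  is_length_function M mul D /\
  (forall m m' m'', D m' m'' = D m m -> m' = m'').                     (* L5 *)

Record rtree : Type := RTree {
  vert : Type;
  root : vert;
  par : vert -> vert;
  par_root : par root = root;
  reach_root : forall v, exists n, Nat.iter n par v = root
}.

Definition edge (T : rtree) (u v : vert T) : Prop :=
  v <> root T /\ par T v = u.

Definition adj (T : rtree) (u v : vert T) : Prop :=
  edge T u v \/ edge T v u.

Definition walk (T : rtree) (x y : vert T) (k : nat) : Prop :=
  exists w : nat -> vert T,
    w 0 = x /\ w k = y /\ forall i, i < k -> adj T (w i) (w (S i)).

Definition dist_le (T : rtree) (x y : vert T) (n : nat) : Prop :=
  exists k, k <= n /\ walk T x y k.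

Definition depth_is (T : rtree) (v : vert T) (n : nat) : Prop :=
  Nat.iter n (par T) v = root T /\
  forall k, k < n -> Nat.iter k (par T) v <> root T.

Definition depth_preserving (T T' : rtree) (f : vert T -> vert T') : Prop :=
  forall v n, depth_is T v n -> depth_is T' (f v) n.

Definition dist_nonincreasing (T T' : rtree) (f : vert T -> vert T') : Prop :=
  forall x y n, dist_le T x y n -> dist_le T' (f x) (f y) n.

(* Rays: alpha_0 = root, alpha_{i+1} a child of alpha_i, for indices   *)
(* i <= length (length counts edges, possibly omega).  Values at       *)
(* indices beyond the length are irrelevant.                           *)
Record ray (T : rtree) : Type := Ray {
  rlen : nbar;
  rv : nat -> vert T
}.
Arguments Ray {T}.
Arguments rlen {T}.
Arguments rv {T}.

Definition idx_in (T : rtree) (a : ray T) (i : nat) : Prop := nle (Fin i) (rlen a).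

Definition is_ray (T : rtree) (a : ray T) : Prop :=
  rv a 0 = root T /\
  forall i, idx_in T a (S i) -> edge T (rv a i) (rv a (S i)).

Definition initial_seg (T : rtree) (a b : ray T) : Prop :=
  nle (rlen a) (rlen b) /\ forall i, idx_in T a i -> rv a i = rv b i.

Definition maximal_ray (T : rtree) (a : ray T) : Prop :=
  is_ray T a /\
  forall b, is_ray T b -> initial_seg T a b -> nle (rlen b) (rlen a).

Definition uniform (T : rtree) : Prop :=
  forall a b, maximal_ray T a -> maximal_ray T b -> rlen a = rlen b.

Definition ray_eq (T : rtree) (a b : ray T) : Prop :=
  rlen a = rlen b /\ forall i, idx_in T a i -> rv a i = rv b i.

Definition common_prefix (T : rtree) (a b : ray T) (k : nat) : Prop :=
  idx_in T a k /\ idx_in T b k /\ forall i, i <= k -> rv a i = rv b i.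

Definition meet_len (T : rtree) (a b : ray T) (x : nbar) : Prop :=
  forall k, nle (Fin k) x <-> common_prefix T a b k.

Record mtree (M : Type) : Type := MTree {
  mtr : rtree;
  max_ray : ray mtr;
  act : vert mtr -> M -> vert mtr
}.
Arguments mtr {M}.
Arguments max_ray {M}.
Arguments act {M}.

Definition ray_act (M : Type) (chi : mtree M) (a : ray (mtr chi)) (m : M)
  : ray (mtr chi) :=
  Ray (rlen a) (fun i => act chi (rv a i) m).

Definition is_elliptic (M : Type) (mul : M -> M -> M) (one : M)
    (chi : mtree M) : Prop :=
  let T := mtr chi in
  uniform T /\
  maximal_ray T (max_ray chi) /\
  (forall v, act chi v one = v) /\
  (forall v m m', act chi v (mul m m') = act chi (act chi v m) m') /\
  (forall m, depth_preserving T T (fun v => act chi v m)) /\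
  (forall m, dist_nonincreasing T T (fun v => act chi v m)) /\
  (forall v, exists i m, idx_in T (max_ray chi) i /\ v = act chi (rv (max_ray chi) i) m).

Definition strongly_faithful (M : Type) (chi : mtree M) : Prop :=
  forall m m', ray_eq (mtr chi) (ray_act M chi (max_ray chi) m)
                                (ray_act M chi (max_ray chi) m') -> m = m'.

Definition is_Dchi (M : Type) (chi : mtree M) (D : M -> M -> nbar) : Prop :=
  forall m m', meet_len (mtr chi) (ray_act M chi (max_ray chi) m)
                          (ray_act M chi (max_ray chi) m') (D m m').

Definition mtree_iso (M : Type) (chi chi' : mtree M) : Prop :=
  exists (f : vert (mtr chi) -> vert (mtr chi')) (g : vert (mtr chi') -> vert (mtr chi)),
    (forall v, g (f v) = v) /\ (forall w, f (g w) = w) /\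
    depth_preserving (mtr chi) (mtr chi') f /\
    dist_nonincreasing (mtr chi) (mtr chi') f /\
    ray_eq (mtr chi') (Ray (rlen (max_ray chi)) (fun i => f (rv (max_ray chi) i)))
                      (max_ray chi') /\
    (forall v m, f (act chi v m) = act chi' (f v) m).

(* Main.v *)
Require Import Defs.
From Stdlib Require Import Arith Lia Classical ClassicalEpsilon FunctionalExtensionality PropExtensionality ProofIrrelevance.

Lemma nle_refl x : nle x x. Proof. destruct x; simpl; auto. Qed.
Lemma nle_trans x y z : nle x y -> nle y z -> nle x z.
Proof. destruct x, y, z; simpl; intros; try lia; auto; contradiction. Qed.
Lemma nle_antisym x y : nle x y -> nle y x -> x = y.
Proof. destruct x, y; simpl; intros; try contradiction; auto. f_equal; lia. Qed.
Lemma nle_char x y : (forall k, nle (Fin k) x -> nle (Fin k) y) -> nle x y.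
Proof. destruct x as [a|], y as [b|]; simpl; intros H; auto.
 specialize (H (S b) I). lia.
Qed.
Lemma nle_0 x : nle (Fin 0) x. Proof. destruct x; simpl; auto; lia. Qed.
Lemma nle_finle i j x : i <= j -> nle (Fin j) x -> nle (Fin i) x.
Proof. intros h h'. apply (nle_trans _ (Fin j)); simpl; auto. Qed.
Lemma nmin_fin k x y : nle (Fin k) (nmin x y) <-> nle (Fin k) x /\ nle (Fin k) y.
Proof. destruct x, y; simpl; split; intros; try tauto; try lia. Qed.

Lemma depth_unique T v n n' : depth_is T v n -> depth_is T v n' -> n = n'.
Proof. intros [H1 H2] [H3 H4]. destruct (lt_eq_lt_dec n n') as [[h|h]|h]; auto.
 - exfalso; apply (H4 n h H1).
 - exfalso; apply (H2 n' h H3). Qed.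

Lemma edge_pres_dist T T' (f : vert T -> vert T') :
  (forall u v, edge T u v -> edge T' (f u) (f v)) -> dist_nonincreasing T T' f.
Proof. intros Hf x y n [k [Hk [w [H0 [H1 H2]]]]]. exists k; split; auto.
 exists (fun i => f (w i)); repeat split; subst; auto.
 intros i Hi. destruct (H2 i Hi) as [E|E]; [left|right]; apply Hf; auto. Qed.

Lemma idx_mono T (a : ray T) i j : j <= i -> idx_in T a i -> idx_in T a j.
Proof. unfold idx_in; intros; eapply nle_finle; eauto. Qed.

Lemma ray_iter T (a : ray T) i k : is_ray T a -> idx_in T a i -> k <= i ->
  Nat.iter k (par T) (rv a i) = rv a (i - k).
Proof. intros Ha Hi. induction k; intros hk.
 - simpl. f_equal; lia.
 - simpl. rewrite IHk by lia.
   replace (i - k) with (S (i - S k)) by lia.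
   destruct Ha as [_ He]. destruct (He (i - S k)) as [_ E]; auto.
   apply (idx_mono _ _ i); auto; lia. Qed.

Lemma ray_depth T (a : ray T) i : is_ray T a -> idx_in T a i -> depth_is T (rv a i) i.
Proof. intros Ha Hi. split.
 - rewrite ray_iter by auto. replace (i - i) with 0 by lia. apply Ha.
 - intros k hk. rewrite ray_iter by (auto; lia).
   replace (i - k) with (S (i - S k)) by lia.
   destruct Ha as [_ He]. destruct (He (i - S k)) as [E _]; auto.
   apply (idx_mono _ _ i); auto; lia. Qed.

Lemma meet_sym T a b x : meet_len T a b x -> meet_len T b a x.
Proof. unfold meet_len, common_prefix. intros H k. rewrite H.
 split; intros [h1 [h2 h3]]; repeat split; auto; intros; symmetry; auto. Qed.

Lemma meet_unique T a b x y : meet_len T a b x -> meet_len T a b y -> x = y.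
Proof. intros H1 H2. apply nle_antisym; apply nle_char; intros k h.
 - apply H2, H1, h.
 - apply H1, H2, h. Qed.

Lemma meet_self T a x : meet_len T a a x -> x = rlen a.
Proof. intros H. apply nle_antisym; apply nle_char; intros k h.
 - apply H in h. apply h.
 - apply H. repeat split; auto. Qed.

Definition aV {M} (chi : mtree M) (i : nat) (m : M) : vert (mtr chi) :=
  act chi (rv (max_ray chi) i) m.

Lemma aV_depth M mul one (chi : mtree M) i m : is_elliptic M mul one chi ->
  idx_in _ (max_ray chi) i -> depth_is _ (aV chi i m) i.
Proof. intros (_&[Hr _]&_&_&Hd&_) Hi. apply Hd. apply ray_depth; auto. Qed.

Lemma aV_par M mul one (chi : mtree M) i m : is_elliptic M mul one chi ->
  idx_in _ (max_ray chi) (S i) -> par _ (aV chi (S i) m) = aV chi i m.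
Proof. intros He Hi. pose proof He as (_&[Hr _]&_&_&Hd&Hn&_).
 assert (Hi' : idx_in _ (max_ray chi) i) by (apply (idx_mono _ _ (S i)); auto).
 pose proof (aV_depth _ _ _ chi i m He Hi') as D1.
 pose proof (aV_depth _ _ _ chi (S i) m He Hi) as D2.
 set (x := rv (max_ray chi) i) in *. set (y := rv (max_ray chi) (S i)) in *.
 assert (W : dist_le _ x y 1).
 { exists 1; split; auto. exists (fun j => match j with 0 => x | _ => y end).
   repeat split; auto. intros j hj. assert (j = 0) by lia. subst. left.
   destruct Hr as [_ He']. apply He'. auto. }
 destruct (Hn m _ _ _ W) as [k [hk [w [w0 [w1 w2]]]]].
 unfold aV in *. fold x y in D1, D2 |- *.
 destruct k.
 - exfalso. rewrite w0 in w1. rewrite w1 in D1. pose proof (depth_unique _ _ _ _ D1 D2). lia.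
 - assert (k = 0) by lia. subst k. destruct (w2 0 ltac:(lia)) as [[_ E]|[E1 E]];
   rewrite w0, w1 in *; auto.
   exfalso. destruct D1 as [D1 _]. destruct D2 as [_ D2].
   apply (D2 i ltac:(lia)). rewrite <- E.
   rewrite <- Nat.iter_succ_r. simpl. rewrite D1. apply par_root. Qed.

Lemma aV_iter M mul one (chi : mtree M) i k m : is_elliptic M mul one chi ->
  idx_in _ (max_ray chi) i -> k <= i ->
  Nat.iter k (par _) (aV chi i m) = aV chi (i - k) m.
Proof. intros He Hi. induction k; intros hk.
 - simpl. f_equal; lia.
 - simpl. rewrite IHk by lia. replace (i - k) with (S (i - S k)) by lia.
   apply (aV_par _ _ _ _ _ _ He). apply (idx_mono _ _ i); auto; lia. Qed.

Lemma aV_act M mul one (chi : mtree M) i m n : is_elliptic M mul one chi ->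
  act chi (aV chi i m) n = aV chi i (mul m n).
Proof. intros (_&_&_&Ha&_). unfold aV. rewrite Ha. auto. Qed.

Lemma aV_one M mul one (chi : mtree M) i : is_elliptic M mul one chi ->
  aV chi i one = rv (max_ray chi) i.
Proof. intros (_&_&H1&_). apply H1. Qed.

Lemma aV_surj M mul one (chi : mtree M) v : is_elliptic M mul one chi ->
  exists p : nat * M, idx_in _ (max_ray chi) (fst p) /\ v = aV chi (fst p) (snd p).
Proof. intros (_&_&_&_&_&_&Hs). destruct (Hs v) as [i [m [h1 h2]]]. exists (i, m); auto. Qed.

Lemma Dchi_len M (chi : mtree M) D m : is_Dchi M chi D -> D m m = rlen (max_ray chi).
Proof. intros H. apply (meet_self _ _ _ (H m m)). Qed.

Lemma aV_eq_iff M mul one (chi : mtree M) D i m m' : is_elliptic M mul one chi ->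
  is_Dchi M chi D -> idx_in _ (max_ray chi) i ->
  (aV chi i m = aV chi i m' <-> nle (Fin i) (D m m')).
Proof. intros He HD Hi. split.
 - intros E. apply (HD m m'). repeat split; auto.
   intros j hj. simpl. fold (aV chi j m) (aV chi j m').
   replace j with (i - (i - j)) by lia.
   rewrite <- !(aV_iter _ _ _ _ _ _ _ He Hi) by lia. rewrite E; auto.
 - intros h. apply (HD m m') in h. destruct h as [_ [_ h]]. apply (h i); auto. Qed.

Lemma ii_to_i M mul one (chi : mtree M) D : is_elliptic M mul one chi ->
  strongly_faithful M chi -> is_Dchi M chi D -> is_strict_length_function M mul D.
Proof. intros He Hf HD. pose proof He as (_&_&_&Ha&_).
 repeat split.
 - intros m m'. apply (meet_unique _ _ _ _ _ (HD m m')). apply meet_sym, HD.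
 - intros m m' m''. rewrite (Dchi_len _ _ _ m HD). apply nle_char. intros k h.
   apply (HD m' m'') in h. apply h.
 - intros m m' m''. apply nle_char. intros k h.
   apply (HD m' m'') in h. apply (HD (mul m' m) (mul m'' m)).
   destruct h as [h1 [h2 h3]]. repeat split; auto. intros i hi. simpl.
   rewrite !Ha. simpl in h3. rewrite h3; auto.
 - intros m m' m''. apply nle_char. intros k h. apply nmin_fin in h as [h1 h2].
   apply (HD m m') in h1. apply (HD m' m'') in h2. apply (HD m m'').
   destruct h1 as [a1 [a2 a3]]. destruct h2 as [b1 [b2 b3]].
   repeat split; auto. intros i hi. rewrite a3, b3; auto.
 - intros m m' m'' E. apply Hf. rewrite (Dchi_len _ _ _ m HD) in E.
   split; auto. intros i hi. assert (h : nle (Fin i) (D m' m'')) by (rewrite E; apply hi).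
   apply (HD m' m'') in h. destruct h as [_ [_ h]]. apply h; auto. Qed.

Definition transfer M mul one (chi chi' : mtree M) (He : is_elliptic M mul one chi)
  (v : vert (mtr chi)) : vert (mtr chi') :=
  let p := proj1_sig (constructive_indefinite_description _ (aV_surj M mul one chi v He)) in
  aV chi' (fst p) (snd p).

Lemma transfer_spec M mul one (chi chi' : mtree M) D He i m :
  is_elliptic M mul one chi' -> is_Dchi M chi D -> is_Dchi M chi' D ->
  idx_in _ (max_ray chi) i -> transfer M mul one chi chi' He (aV chi i m) = aV chi' i m.
Proof. intros He' HD HD' Hi. unfold transfer.
 destruct (constructive_indefinite_description _ _) as [[j n] [Hj E]]. simpl in *.
 assert (j = i). { apply (depth_unique _ (aV chi i m)).
   rewrite E. apply (aV_depth _ _ _ _ _ _ He Hj). apply (aV_depth _ _ _ _ _ _ He Hi). }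
 subst j.
 assert (Hi' : idx_in _ (max_ray chi') i).
 { unfold idx_in. rewrite <- (Dchi_len _ _ _ one HD'), (Dchi_len _ _ _ one HD). exact Hi. }
 apply (aV_eq_iff _ _ _ _ _ _ _ _ He' HD' Hi'). apply (aV_eq_iff _ _ _ _ _ _ _ _ He HD Hi).
 auto. Qed.

Lemma uniqueness M mul one (chi chi' : mtree M) D :
  is_elliptic M mul one chi -> is_Dchi M chi D ->
  is_elliptic M mul one chi' -> is_Dchi M chi' D -> mtree_iso M chi chi'.
Proof. intros He HD He' HD'.
 set (f := transfer M mul one chi chi' He). set (g := transfer M mul one chi' chi He').
 assert (L : rlen (max_ray chi) = rlen (max_ray chi')).
 { rewrite <- (Dchi_len _ _ _ one HD'), (Dchi_len _ _ _ one HD). auto. }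
 assert (Fs : forall i m, idx_in _ (max_ray chi) i -> f (aV chi i m) = aV chi' i m).
 { intros; apply (transfer_spec _ _ _ _ _ D); auto. }
 assert (Gs : forall i m, idx_in _ (max_ray chi') i -> g (aV chi' i m) = aV chi i m).
 { intros; apply (transfer_spec _ _ _ _ _ D); auto. }
 assert (Ii : forall i, idx_in _ (max_ray chi) i <-> idx_in _ (max_ray chi') i).
 { unfold idx_in; rewrite L; tauto. }
 exists f, g. refine (conj _ (conj _ (conj _ (conj _ (conj (conj _ _) _))))).
 - intros v. destruct (aV_surj _ _ _ _ v He) as [[i m] [Hi E]]; simpl in *; subst v.
   rewrite Fs, Gs; auto. apply Ii; auto.
 - intros v. destruct (aV_surj _ _ _ _ v He') as [[i m] [Hi E]]; simpl in *; subst v.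
   rewrite Gs, Fs; auto. apply Ii; auto.
 - intros v n Hv. destruct (aV_surj _ _ _ _ v He) as [[i m] [Hi E]]; simpl in *; subst v.
   rewrite Fs by auto. pose proof (depth_unique _ _ _ _ Hv (aV_depth _ _ _ _ _ _ He Hi)). subst n.
   apply (aV_depth _ _ _ _ _ _ He'). apply Ii; auto.
 - apply edge_pres_dist. intros u v [Hnr Hp].
   destruct (aV_surj _ _ _ _ v He) as [[j m] [Hj E]]; simpl in *; subst v.
   destruct j as [|i].
   + exfalso. apply Hnr. pose proof (aV_depth _ _ _ _ _ m He Hj) as [D0 _]. apply D0.
   + rewrite (aV_par _ _ _ _ _ _ He Hj) in Hp. subst u.
     assert (Hi : idx_in _ (max_ray chi) i) by (apply (idx_mono _ _ (S i)); auto).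
     rewrite !Fs by auto. split.
     * intro R. pose proof (aV_depth _ _ _ _ _ m He' (proj1 (Ii _) Hj)) as [_ D1].
       apply (D1 0 ltac:(lia)). simpl. exact R.
     * apply (aV_par _ _ _ _ _ _ He'). apply Ii; auto.
 - exact L.
 - intros i Hi. simpl. rewrite <- (aV_one _ _ _ _ _ He), <- (aV_one _ _ _ _ _ He').
   apply Fs; auto.
 - intros v n. destruct (aV_surj _ _ _ _ v He) as [[i m] [Hi E]]; simpl in *; subst v.
   rewrite (aV_act _ _ _ _ _ _ _ He), !Fs by auto. rewrite (aV_act _ _ _ _ _ _ _ He'). auto. Qed.

Definition clampL (L : nbar) (i : nat) : nat :=
  match L with Fin n => Nat.min i n | Omega => i end.
Definition cls {M} (D : M -> M -> nbar) (i : nat) (m : M) : M -> Prop :=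
  fun m' => nle (Fin i) (D m m').
Definition Vt {M} (D : M -> M -> nbar) (one : M) : Type :=
  { p : nat * (M -> Prop) | exists i m, p = (clampL (D one one) i, cls D (clampL (D one one) i) m) }.
Definition vx {M} (D : M -> M -> nbar) (one : M) (i : nat) (m : M) : Vt D one :=
  exist _ (clampL (D one one) i, cls D (clampL (D one one) i) m) (ex_intro _ i (ex_intro _ m eq_refl)).

Lemma sig_eq (A : Type) (P : A -> Prop) (x y : sig P) : proj1_sig x = proj1_sig y -> x = y.
Proof. destruct x, y; simpl; intros; subst; f_equal; apply proof_irrelevance. Qed.

Lemma clamp_ok L i : nle (Fin (clampL L i)) L.
Proof. destruct L; simpl; auto; lia. Qed.
Lemma clamp_valid L i : nle (Fin i) L -> clampL L i = i.
Proof. destruct L; simpl; auto; lia. Qed.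

Lemma vx_surj {M} (D : M -> M -> nbar) one (v : Vt D one) :
  exists p : nat * M, nle (Fin (fst p)) (D one one) /\ v = vx D one (fst p) (snd p).
Proof. destruct v as [p [i [m E]]]. exists (clampL (D one one) i, m). split; simpl.
 - apply clamp_ok.
 - apply sig_eq. simpl. rewrite E. rewrite (clamp_valid _ (clampL _ i)) by apply clamp_ok. auto. Qed.

Definition pick {M} (D : M -> M -> nbar) one (v : Vt D one) : nat * M :=
  proj1_sig (constructive_indefinite_description _ (vx_surj D one v)).
Lemma pick_spec {M} (D : M -> M -> nbar) one (v : Vt D one) :
  nle (Fin (fst (pick D one v))) (D one one) /\ v = vx D one (fst (pick D one v)) (snd (pick D one v)).
Proof. unfold pick. destruct (constructive_indefinite_description _ _); auto. Qed.

Definition vpar {M} (D : M -> M -> nbar) one (v : Vt D one) : Vt D one :=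
  vx D one (pred (fst (pick D one v))) (snd (pick D one v)).
Definition vact {M} (D : M -> M -> nbar) one mul (v : Vt D one) (n : M) : Vt D one :=
  vx D one (fst (pick D one v)) (mul (snd (pick D one v)) n).

Lemma Dself M mul D (one : M) (H : is_strict_length_function M mul D) m : D m m = D one one.
Proof. destruct H as [(_&H2&_) _]. apply nle_antisym; apply H2. Qed.
Lemma Dle M mul D (one : M) (H : is_strict_length_function M mul D) m m' : nle (D m m') (D one one).
Proof. destruct H as [(_&H2&_) _]. apply H2. Qed.

Lemma vx_eq M mul D (one : M) (H : is_strict_length_function M mul D) i j m m' :
  nle (Fin i) (D one one) -> nle (Fin j) (D one one) ->
  (vx D one i m = vx D one j m' <-> i = j /\ nle (Fin i) (D m m')).
Proof. intros Hi Hj. pose proof H as [(H1&_&_&H4) _]. split.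
 - intros E. apply (f_equal (@proj1_sig _ _)) in E. simpl in E.
   rewrite !clamp_valid in E by auto. injection E as E1 E2. subst j. split; auto.
   assert (T : cls D i m' m'). { unfold cls. rewrite (Dself _ _ _ one H); auto. }
   rewrite <- E2 in T. exact T.
 - intros [<- h]. apply sig_eq. simpl. rewrite !clamp_valid by auto. f_equal.
   unfold cls. apply functional_extensionality. intros z. apply propositional_extensionality.
   split; intros h'.
   + eapply nle_trans; [|apply (H4 m' m z)]. apply nmin_fin; split; auto. rewrite H1; auto.
   + eapply nle_trans; [|apply (H4 m m' z)]. apply nmin_fin; split; auto. Qed.

Lemma par_vx M mul D (one : M) (H : is_strict_length_function M mul D) i m :
  nle (Fin i) (D one one) -> vpar D one (vx D one i m) = vx D one (pred i) m.
Proof. intros Hi. unfold vpar. destruct (pick_spec D one (vx D one i m)) as [Hv E].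
 destruct (pick D one (vx D one i m)) as [j n]. simpl in *.
 symmetry in E. apply (vx_eq _ _ _ _ H) in E as [-> h]; auto.
 apply (vx_eq _ _ _ _ H); try (eapply nle_finle; [|exact Hi]; lia). split; auto.
 eapply nle_finle; [|exact h]; lia. Qed.

Lemma act_vx M mul D (one : M) (H : is_strict_length_function M mul D) i m n :
  nle (Fin i) (D one one) -> vact D one mul (vx D one i m) n = vx D one i (mul m n).
Proof. intros Hi. unfold vact. destruct (pick_spec D one (vx D one i m)) as [Hv E].
 destruct (pick D one (vx D one i m)) as [j k]. simpl in *.
 symmetry in E. apply (vx_eq _ _ _ _ H) in E as [-> h]; auto.
 apply (vx_eq _ _ _ _ H); auto. split; auto.
 destruct H as [(_&_&H3&_) _]. eapply nle_trans; [exact h|]. apply H3. Qed.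

Lemma vx0 M mul D (one : M) (H : is_strict_length_function M mul D) m :
  vx D one 0 m = vx D one 0 one.
Proof. apply (vx_eq _ _ _ _ H); try apply nle_0. split; auto; apply nle_0. Qed.

Lemma iter_vx M mul D (one : M) (H : is_strict_length_function M mul D) i k m :
  nle (Fin i) (D one one) -> k <= i ->
  Nat.iter k (vpar D one) (vx D one i m) = vx D one (i - k) m.
Proof. intros Hi. induction k; intros hk.
 - simpl. f_equal; lia.
 - simpl. rewrite IHk by lia. rewrite (par_vx _ _ _ _ H). f_equal; lia.
   eapply nle_finle; [|exact Hi]; lia. Qed.

Lemma proot M mul D (one : M) (H : is_strict_length_function M mul D) :
  vpar D one (vx D one 0 one) = vx D one 0 one.
Proof. apply (par_vx _ _ _ _ H). apply nle_0. Qed.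

Lemma preach M mul D (one : M) (H : is_strict_length_function M mul D) v :
  exists n, Nat.iter n (vpar D one) v = vx D one 0 one.
Proof. destruct (pick_spec D one v) as [Hv E]. rewrite E. eexists.
 rewrite (iter_vx _ _ _ _ H _ (fst (pick D one v))) by auto. rewrite Nat.sub_diag.
 apply (vx0 _ _ _ _ H). Qed.

Definition ctree M mul D (one : M) (H : is_strict_length_function M mul D) : rtree :=
  RTree (Vt D one) (vx D one 0 one) (vpar D one) (proot M mul D one H) (preach M mul D one H).

Definition cchi M mul D (one : M) (H : is_strict_length_function M mul D) : mtree M :=
  MTree M (ctree M mul D one H) (@Ray (ctree M mul D one H) (D one one) (fun i => vx D one i one)) (vact D one mul).

Lemma cdepth M mul D (one : M) (H : is_strict_length_function M mul D) i m :
  nle (Fin i) (D one one) -> depth_is (ctree M mul D one H) (vx D one i m) i.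
Proof. intros Hi. split; simpl.
 - rewrite (iter_vx _ _ _ _ H) by auto. rewrite Nat.sub_diag. apply (vx0 _ _ _ _ H).
 - intros k hk. rewrite (iter_vx _ _ _ _ H) by (auto; lia). intros E.
   apply (vx_eq _ _ _ _ H) in E as [E _]; try lia; try apply nle_0.
   eapply nle_finle; [|exact Hi]; lia. Qed.

Lemma cdepth_valid M mul D (one : M) (H : is_strict_length_function M mul D) v n :
  depth_is (ctree M mul D one H) v n -> nle (Fin n) (D one one) /\ v = vx D one n (snd (pick D one v)).
Proof. intros Hd. destruct (pick_spec D one v) as [Hv E].
 assert (n = fst (pick D one v)). { apply (depth_unique _ v _ _ Hd). rewrite E at 1. apply cdepth; auto. }
 subst n. auto. Qed.

Lemma cedge M mul D (one : M) (H : is_strict_length_function M mul D) u v :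
  edge (ctree M mul D one H) u v -> exists i m, nle (Fin (S i)) (D one one) /\
     v = vx D one (S i) m /\ u = vx D one i m.
Proof. intros [Hnr Hp]. simpl in *. destruct (pick_spec D one v) as [Hv E].
 destruct (pick D one v) as [j m]. simpl in *. destruct j as [|i].
 - exfalso. apply Hnr. rewrite E. apply (vx0 _ _ _ _ H).
 - exists i, m. repeat split; auto. rewrite <- Hp, E. apply (par_vx _ _ _ _ H); auto. Qed.

Lemma cedge_mk M mul D (one : M) (H : is_strict_length_function M mul D) i m :
  nle (Fin (S i)) (D one one) -> edge (ctree M mul D one H) (vx D one i m) (vx D one (S i) m).
Proof. intros Hi. split; simpl.
 - intros E. apply (vx_eq _ _ _ _ H) in E as [E _]; try lia; auto; apply nle_0.
 - apply (par_vx _ _ _ _ H); auto. Qed.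

Lemma cray_le M mul D (one : M) (H : is_strict_length_function M mul D) a :
  is_ray (ctree M mul D one H) a -> nle (rlen a) (D one one).
Proof. intros Ha. apply nle_char. intros k hk.
 pose proof (ray_depth _ _ _ Ha hk) as Hd. apply (cdepth_valid _ _ _ _ H) in Hd. apply Hd. Qed.

Lemma cmax_len M mul D (one : M) (H : is_strict_length_function M mul D) a :
  maximal_ray (ctree M mul D one H) a -> rlen a = D one one.
Proof. intros [Ha Hm]. apply nle_antisym; [apply (cray_le _ _ _ _ H); auto|].
 apply nle_char. intros k. induction k; intros hk.
 - apply nle_0.
 - assert (IH : nle (Fin k) (rlen a)) by (apply IHk; eapply nle_finle; [|exact hk]; lia).
   destruct (classic (nle (Fin (S k)) (rlen a))) as [h|h]; auto. exfalso.
   assert (Rl : rlen a = Fin k).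
   { revert IH h. destruct (rlen a); simpl; intros; [f_equal; lia | exfalso; auto]. }
   destruct (pick_spec D one (rv a k)) as [Hv E].
   assert (Ek : fst (pick D one (rv a k)) = k).
   { apply (depth_unique _ (rv a k)). rewrite E at 1. apply cdepth; auto. apply ray_depth; auto. }
   rewrite Ek in E.
   set (b := @Ray (ctree M mul D one H) (Fin (S k))
        (fun i => if i <=? k then rv a i else vx D one (S k) (snd (pick D one (rv a k))))).
   assert (Hb : is_ray _ b).
   { split. simpl. apply Ha. intros i hi.
     unfold idx_in in hi; simpl in hi. unfold b; cbn [rv].
     destruct (le_lt_dec (S i) k) as [l|l].
     - rewrite (proj2 (Nat.leb_le i k)) by lia. rewrite (proj2 (Nat.leb_le (S i) k)) by lia.
       apply Ha. unfold idx_in. rewrite Rl. simpl. lia.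
     - assert (i = k) by lia. subst i. rewrite Nat.leb_refl.
       rewrite (proj2 (Nat.leb_gt (S k) k)) by lia. rewrite E at 1. apply cedge_mk; auto. }
   assert (Hs : initial_seg _ a b).
   { split. rewrite Rl; simpl; lia. intros i hi. unfold idx_in in hi. rewrite Rl in hi. simpl in hi.
     simpl. destruct (Nat.leb_spec i k); auto; lia. }
   specialize (Hm b Hb Hs). rewrite Rl in Hm. simpl in Hm. lia. Qed.

Lemma cchi_elliptic M mul D (one : M)
  (mul_assoc : forall a b c, mul a (mul b c) = mul (mul a b) c)
  (mul1m : forall a, mul one a = a) (mulm1 : forall a, mul a one = a)
  (H : is_strict_length_function M mul D) : is_elliptic M mul one (cchi M mul D one H).
Proof.
 assert (Hmax : maximal_ray (ctree M mul D one H) (@Ray (ctree M mul D one H) (D one one) (fun i => vx D one i one))).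
 { split.
   - split; simpl; auto. intros i hi. apply cedge_mk; auto.
   - intros b Hb _. simpl. apply (cray_le _ _ _ _ H); auto. }
 split; [|split; [exact Hmax|split; [|split; [|split; [|split]]]]]; simpl.
 - intros a b Ha Hb. rewrite (cmax_len _ _ _ _ H a), (cmax_len _ _ _ _ H b); auto.
 - intros v. destruct (pick_spec D one v) as [Hv E]. rewrite E at 1.
   rewrite (act_vx _ _ _ _ H) by auto. rewrite mulm1. auto.
 - intros v m m'. destruct (pick_spec D one v) as [Hv E]. rewrite E.
   rewrite !(act_vx _ _ _ _ H) by auto. rewrite mul_assoc. auto.
 - intros m v n Hd. apply (cdepth_valid _ _ _ _ H) in Hd as [Hn E]. rewrite E.
   simpl. rewrite (act_vx _ _ _ _ H) by auto. apply cdepth; auto.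
 - intros m. apply edge_pres_dist. intros u v He.
   apply (cedge _ _ _ _ H) in He as [i [m0 [Hi [-> ->]]]]. simpl.
   rewrite (act_vx _ _ _ _ H i) by (eapply nle_finle; [|exact Hi]; lia).
   rewrite (act_vx _ _ _ _ H (S i)) by auto.
   apply cedge_mk; auto.
 - intros v. destruct (pick_spec D one v) as [Hv E]. exists (fst (pick D one v)), (snd (pick D one v)).
   split; auto. simpl. rewrite (act_vx _ _ _ _ H) by auto. rewrite mul1m. auto. Qed.

Lemma cchi_sf M mul D (one : M)
  (mul1m : forall a, mul one a = a)
  (H : is_strict_length_function M mul D) : strongly_faithful M (cchi M mul D one H).
Proof. intros m m' [_ Hr]. simpl in Hr. destruct H as [HL H5]. apply (H5 one).
 assert (HH : is_strict_length_function M mul D) by (split; auto).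
 apply nle_antisym; [apply (Dle _ _ _ _ HH)|]. apply nle_char. intros k hk.
 specialize (Hr k hk). simpl in Hr. rewrite !(act_vx _ _ _ _ HH) in Hr by auto.
 rewrite !mul1m in Hr. apply (vx_eq _ _ _ _ HH) in Hr; auto. apply Hr. Qed.

Lemma cchi_D M mul D (one : M)
  (mul1m : forall a, mul one a = a)
  (H : is_strict_length_function M mul D) : is_Dchi M (cchi M mul D one H) D.
Proof. intros m m' k. unfold common_prefix, idx_in. simpl. split.
 - intros hk. assert (Hk : nle (Fin k) (D one one)) by (eapply nle_trans; [exact hk|apply (Dle _ _ _ _ H)]).
   repeat split; auto. intros i hi.
   assert (Hi : nle (Fin i) (D one one)) by (eapply nle_finle; [|exact Hk]; lia).
   rewrite !(act_vx _ _ _ _ H) by auto. rewrite !mul1m.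
   apply (vx_eq _ _ _ _ H); auto. split; auto. eapply nle_finle; [|exact hk]; lia.
 - intros [Hk [_ h]]. specialize (h k (le_n k)).
   rewrite !(act_vx _ _ _ _ H) in h by auto. rewrite !mul1m in h.
   apply (vx_eq _ _ _ _ H) in h; auto. apply h. Qed.

Theorem corollary4p9
  (M : Type) (mul : M -> M -> M) (one : M)
  (mul_assoc : forall a b c, mul a (mul b c) = mul (mul a b) c)
  (mul1m : forall a, mul one a = a)
  (mulm1 : forall a, mul a one = a)
  (D : M -> M -> nbar) :
  (is_strict_length_function M mul D <->
     exists chi : mtree M,
       is_elliptic M mul one chi /\ strongly_faithful M chi /\ is_Dchi M chi D) /\
  (forall chi chi' : mtree M,
       is_elliptic M mul one chi -> strongly_faithful M chi -> is_Dchi M chi D ->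
       is_elliptic M mul one chi' -> strongly_faithful M chi' -> is_Dchi M chi' D ->
       mtree_iso M chi chi').
Proof. split; [split|].
 - intros H. exists (cchi M mul D one H). split; [apply cchi_elliptic|split; [apply cchi_sf|apply cchi_D]]; auto.
 - intros [chi [He [Hf HD]]]. apply (ii_to_i _ _ one chi); auto.
 - intros chi chi' He _ HD He' _ HD'. apply (uniqueness _ mul one _ _ D); auto. Qed.
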